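(* Let $((A,\cdot),N)$ be a Nijenhuis algebra with multiplication $\mu$. Then there is a bijection between the set of equivalence classes of infinitesimal deformations of $((A,\cdot),N)$ and the second cohomology group $H^2_{\mathrm{NAlg}}((A,N))$.
   Context: Over a field $\mathbf{k}$ of characteristic $0$. A Nijenhuis algebra is an associative algebra $(A,\cdot)$ with linear $N$ satisfying $N(a)N(b)=N(N(a)b+aN(b)-N(ab))$. An infinitesimal deformation is a pair $\mu_t=\mu+t\mu_1$ ($\mu_1\in\mathrm{Hom}(A^{\otimes2},A)$), $N_t=N+tN_1$ ($N_1\in\mathrm{Hom}(A,A)$) such that $((A[t]/(t^2),\mu_t),N_t)$ is a Nijenhuis algebra over $\mathbf{k}[t]/(t^2)$. Two infinitesimal deformations $(\mu+t\mu_1,N+tN_1)$, $(\mu+t\mu'_1,N+tN'_1)$ are equivalent if there is a $\mathbf{k}[t]/(t^2)$-linear map $\varphi_t=\mathrm{Id}_A+t\varphi_1$ which is an isomorphism of Nijenhuis algebras between them (respects multiplications and intertwines $N_t$, $N'_t$). Cochain complex: $C^0_{\mathrm{NAlg}}((A,N))=0$, $C^1=\mathrm{Hom}(A,A)$, $C^n=\mathrm{Hom}(A^{\otimes n},A)\oplus\mathrm{Hom}(A^{\otimes n-1},A)$ for $n\ge2$; $\delta_{\mathrm{NAlg}}(f)=(\delta_{\mathrm{Hoch}}f,-\partial^Nf)$ for $f\in C^1$, $\delta_{\mathrm{NAlg}}(\chi,F)=(\delta_{\mathrm{Hoch}}\chi,\ d_NF+(-1)^n\partial^N\chi)$ for $(\chi,F)\in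 C^n$, $n\ge2$, where $(\delta_{\mathrm{Hoch}}f)(a_1,\dots,a_{n+1})=a_1f(a_2,\dots,a_{n+1})+\sum_{i=1}^n(-1)^if(\dots,a_ia_{i+1},\dots)+(-1)^{n+1}f(a_1,\dots,a_n)a_{n+1}$; $(d_NF)(a_1,\dots,a_{n+1})=N(a_1)F(a_2,\dots,a_{n+1})-(-1)^nF(a_1,\dots,a_n)N(a_{n+1})+\sum_{i=1}^n(-1)^iF(a_1,\dots,a_{i-1},N(a_i)a_{i+1}+a_iN(a_{i+1})-N(a_ia_{i+1}),\dots,a_{n+1})-N((\delta_{\mathrm{Hoch}}F)(a_1,\dots,a_{n+1}))$; $\partial^N(f)(a_1,\dots,a_n)=\sum_{S\subseteq\{1..n\}}(-1)^{|S|}N^{|S|}(f(b_1,\dots,b_n))$, $b_i=a_i$ for $i\in S$, $b_i=N(a_i)$ otherwise. $H^2_{\mathrm{NAlg}}((A,N))$ = 2-cocycles modulo 2-coboundaries. *)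

(* Defs.v *)
From HB Require Import structures.
From mathcomp Require Import all_boot all_order all_algebra.
Set Implicit Arguments. Unset Strict Implicit. Unset Printing Implicit Defensive.
Import GRing.Theory.
Local Open Scope ring_scope.

Definition klinear (k : fieldType) (A : lmodType k) (f : A -> A) : Prop :=
  forall (c : k) (x y : A), f (c *: x + y) = c *: f x + f y.

Definition kbilinear (k : fieldType) (A : lmodType k) (m : A -> A -> A) : Prop :=
  (forall (c : k) (x y z : A), m (c *: x + y) z = c *: m x z + m y z) /\
  (forall (c : k) (x y z : A), m z (c *: x + y) = c *: m z x + m z y).

Definition nijenhuis_identity (V : zmodType) (m : V -> V -> V) (N : V -> V) :=
  forall a b, m (N a) (N b) = N (m (N a) b + m a (N b) - N (m a b)).

Definition assoc_op (V : Type) (m : V -> V -> V) := forall a b c, m a (m b c) = m (m a b) c.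

Definition nijenhuis_algebra (k : fieldType) (A : lmodType k)
  (mu : A -> A -> A) (N : A -> A) : Prop :=
  kbilinear mu /\ assoc_op mu /\ klinear N /\ nijenhuis_identity mu N.

(* A[t]/(t^2) is modelled as A * A, (a, b) <-> a + t b.  The k[t]/(t^2)-bilinear
   extension of mu + t mu1 and the k[t]/(t^2)-linear extension of N + t N1 are: *)
Definition dmul (k : fieldType) (A : lmodType k) (mu mu1 : A -> A -> A)
  (x y : A * A) : A * A :=
  (mu x.1 y.1, mu x.1 y.2 + mu x.2 y.1 + mu1 x.1 y.1).

Definition dN (k : fieldType) (A : lmodType k) (N N1 : A -> A) (x : A * A) : A * A :=
  (N x.1, N x.2 + N1 x.1).

Definition dphi (k : fieldType) (A : lmodType k) (phi1 : A -> A) (x : A * A) : A * A :=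
  (x.1, x.2 + phi1 x.1).

Definition cochain2 (k : fieldType) (A : lmodType k) : Type := ((A -> A -> A) * (A -> A))%type.

Definition cochain2_sub (k : fieldType) (A : lmodType k) (c d : cochain2 A) : cochain2 A :=
  (fun a b => c.1 a b - d.1 a b, fun a => c.2 a - d.2 a).

Definition inf_deformation (k : fieldType) (A : lmodType k) (mu : A -> A -> A) (N : A -> A)
  (d : cochain2 A) : Prop :=
  kbilinear d.1 /\ klinear d.2 /\
  assoc_op (dmul mu d.1) /\ nijenhuis_identity (dmul mu d.1) (dN N d.2).

Definition deform_equiv (k : fieldType) (A : lmodType k) (mu : A -> A -> A) (N : A -> A)
  (d d' : cochain2 A) : Prop :=
  exists phi1 : A -> A, klinear phi1 /\
    (forall x y, dphi phi1 (dmul mu d.1 x y) = dmul mu d'.1 (dphi phi1 x) (dphi phi1 y)) /\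
    (forall x, dphi phi1 (dN N d.2 x) = dN N d'.2 (dphi phi1 x)).

Definition hoch1 (k : fieldType) (A : lmodType k) (mu : A -> A -> A) (f : A -> A)
  (a1 a2 : A) : A :=
  mu a1 (f a2) - f (mu a1 a2) + mu (f a1) a2.

Definition hoch2 (k : fieldType) (A : lmodType k) (mu : A -> A -> A) (chi : A -> A -> A)
  (a1 a2 a3 : A) : A :=
  mu a1 (chi a2 a3) - chi (mu a1 a2) a3 + chi a1 (mu a2 a3) - mu (chi a1 a2) a3.

Definition partialN1 (k : fieldType) (A : lmodType k) (N : A -> A) (f : A -> A) (a : A) : A :=
  f (N a) - N (f a).

(* partial^N for n = 2 : sum over S subset {1,2} *)
Definition partialN2 (k : fieldType) (A : lmodType k) (N : A -> A) (chi : A -> A -> A)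
  (a1 a2 : A) : A :=
  chi (N a1) (N a2) - N (chi a1 (N a2)) - N (chi (N a1) a2) + N (N (chi a1 a2)).

Definition dN1 (k : fieldType) (A : lmodType k) (mu : A -> A -> A) (N : A -> A) (F : A -> A)
  (a1 a2 : A) : A :=
  mu (N a1) (F a2) + mu (F a1) (N a2)
  - F (mu (N a1) a2 + mu a1 (N a2) - N (mu a1 a2))
  - N (hoch1 mu F a1 a2).

(* 2-cocycles: (chi, F) in C^2 with delta_NAlg (chi, F) = (hoch chi, d_N F + partial^N chi) = 0 *)
Definition NAlg_2cocycle (k : fieldType) (A : lmodType k) (mu : A -> A -> A) (N : A -> A)
  (c : cochain2 A) : Prop :=
  kbilinear c.1 /\ klinear c.2 /\
  (forall a1 a2 a3, hoch2 mu c.1 a1 a2 a3 = 0) /\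
  (forall a1 a2, dN1 mu N c.2 a1 a2 + partialN2 N c.1 a1 a2 = 0).

(* 2-coboundaries: delta_NAlg f = (hoch f, - partial^N f) for f in C^1 = Hom(A,A) *)
Definition NAlg_2coboundary (k : fieldType) (A : lmodType k) (mu : A -> A -> A) (N : A -> A)
  (c : cochain2 A) : Prop :=
  exists f : A -> A, klinear f /\
    (forall a1 a2, c.1 a1 a2 = hoch1 mu f a1 a2) /\
    (forall a, c.2 a = - partialN1 N f a).

(* Main.v *)
Require Import Defs.
From HB Require Import structures.
From mathcomp Require Import all_boot all_order all_algebra ring.
Import GRing.Theory.
Set Implicit Arguments. Unset Strict Implicit.
Local Open Scope ring_scope.

Section Dual.
Variable V : zmodType.
Definition dualT := (int * V)%type.
HB.instance Definition _ := GRing.Zmodule.on dualT.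
Definition dmulT (x y : dualT) : dualT := (x.1 * y.1, y.2 *~ x.1 + x.2 *~ y.1).
Definition doneT : dualT := (1, 0).
Lemma dmulTA : associative dmulT.
Proof.
move=> [a x] [b y] [c z]; rewrite /dmulT /=; congr pair; first by rewrite mulrA.
rewrite !mulrzDl -!mulrzA addrA; congr (_ + _ + _); congr (_ *~ _); apply: mulrC.
Qed.
Lemma dmulTC : commutative dmulT.
Proof. by move=> [a x] [b y]; rewrite /dmulT /= mulrC addrC. Qed.
Lemma dmulT1 : left_id doneT dmulT.
Proof. by move=> [b y]; rewrite /dmulT /= mul1r mul0rz addr0. Qed.
Lemma dmulTDl : left_distributive dmulT +%R.
Proof.
move=> [a x] [a' x'] [b y]; rewrite /dmulT /=; congr pair; first by rewrite mulrDl.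
by rewrite mulrzDr mulrzDl addrACA.
Qed.
HB.instance Definition _ := GRing.Zmodule_isComPzRing.Build dualT dmulTA dmulTC dmulT1 dmulTDl.
Definition inj (v : V) : dualT := (0, v).
Lemma injE (l r : V) : (inj l = inj r) -> l = r.
Proof. by case. Qed.
Lemma injD a b : inj (a + b) = inj a + inj b.
Proof. by rewrite /inj; congr pair; rewrite /= addr0. Qed.
Lemma injN a : inj (- a) = - inj a.
Proof. by rewrite /inj; congr pair; rewrite /= oppr0. Qed.
Lemma injB a b : inj (a - b) = inj a - inj b.
Proof. by rewrite injD injN. Qed.
Lemma inj0 : inj 0 = 0. Proof. by []. Qed.
End Dual.

Ltac zmod_ring := apply: injE; rewrite ?(injD, injN, inj0); ring.

Lemma useH (V : zmodType) (L R X Y : V) : L = R -> X - Y - (L - R) = 0 -> X = Y.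
Proof. by move=> -> /eqP; rewrite subrr subr0 subr_eq0 => /eqP. Qed.

Section Lin.
Variables (k : fieldType) (A : lmodType k).
Lemma klinD (f : A -> A) : klinear f -> forall x y, f (x + y) = f x + f y.
Proof. by move=> H x y; rewrite -{1}[x]scale1r H scale1r. Qed.
Lemma klin0 (f : A -> A) : klinear f -> f 0 = 0.
Proof.
move=> H; have := klinD H 0 0; rewrite addr0 => E.
by apply: (addrI (f 0)); rewrite addr0 -E.
Qed.
Lemma klinN (f : A -> A) : klinear f -> forall x, f (- x) = - f x.
Proof. by move=> H x; have := H (-1) x 0; rewrite addr0 klin0 // addr0 !scaleN1r. Qed.
Lemma klin_lin (m : A -> A -> A) (H : kbilinear m) z : klinear (m ^~ z).
Proof. by move=> c x y; case: H => H _; apply: H. Qed.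
Lemma klin_linr (m : A -> A -> A) (H : kbilinear m) z : klinear (m z).
Proof. by move=> c x y; case: H => _ H; apply: H. Qed.
Lemma bilDl (m : A -> A -> A) (H : kbilinear m) x y z : m (x + y) z = m x z + m y z.
Proof. exact: (klinD (klin_lin H z)). Qed.
Lemma bilDr (m : A -> A -> A) (H : kbilinear m) x y z : m z (x + y) = m z x + m z y.
Proof. exact: (klinD (klin_linr H z)). Qed.
Lemma bilNl (m : A -> A -> A) (H : kbilinear m) x z : m (- x) z = - m x z.
Proof. exact: (klinN (klin_lin H z)). Qed.
Lemma bilNr (m : A -> A -> A) (H : kbilinear m) x z : m z (- x) = - m z x.
Proof. exact: (klinN (klin_linr H z)). Qed.
Lemma bil0l (m : A -> A -> A) (H : kbilinear m) z : m 0 z = 0.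
Proof. exact: (klin0 (klin_lin H z)). Qed.
Lemma bil0r (m : A -> A -> A) (H : kbilinear m) z : m z 0 = 0.
Proof. exact: (klin0 (klin_linr H z)). Qed.
Lemma pairD (a b c d : A) : ((a, b) + (c, d) : A * A) = (a + c, b + d).
Proof. by []. Qed.
Lemma pairN (a b : A) : (- (a, b) : A * A) = (- a, - b).
Proof. by []. Qed.
End Lin.

Ltac expand1 := match goal with
 | H : klinear ?f |- context [?f (?x + ?y)] => rewrite (klinD H x y)
 | H : klinear ?f |- context [?f (- ?x)] => rewrite (klinN H x)
 | H : klinear ?f |- context [?f 0] => rewrite (klin0 H)
 | H : kbilinear ?m |- context [?m (?x + ?y) ?z] => rewrite (bilDl H x y z)
 | H : kbilinear ?m |- context [?m ?z (?x + ?y)] => rewrite (bilDr H x y z)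
 | H : kbilinear ?m |- context [?m (- ?x) ?z] => rewrite (bilNl H x z)
 | H : kbilinear ?m |- context [?m ?z (- ?x)] => rewrite (bilNr H x z)
 | H : kbilinear ?m |- context [?m 0 ?z] => rewrite (bil0l H z)
 | H : kbilinear ?m |- context [?m ?z 0] => rewrite (bil0r H z)
 end.
Ltac expand := repeat expand1.

Theorem theorem4p2 (k : fieldType) (Hchar : [pchar k] =i pred0) (A : lmodType k)
  (mu : A -> A -> A) (N : A -> A) (HA : nijenhuis_algebra mu N) :
  exists Phi : cochain2 A -> cochain2 A,
    (forall d, inf_deformation mu N d -> NAlg_2cocycle mu N (Phi d)) /\
    (forall d d', inf_deformation mu N d -> inf_deformation mu N d' ->
       (deform_equiv mu N d d' <-> NAlg_2coboundary mu N (cochain2_sub (Phi d) (Phi d')))) /\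
    (forall c, NAlg_2cocycle mu N c ->
       exists d, inf_deformation mu N d /\ NAlg_2coboundary mu N (cochain2_sub (Phi d) c)).
Proof.
case: HA => Hmu [Hass [HN HNI]].
exists id; split; last split.
- case=> mu1 N1 [/= Hm1 [HN1 [Hass1 HNI1]]]; split=> //; split=> //; split.
  + move=> a1 a2 a3; have := congr1 snd (Hass1 (a1, 0) (a2, 0) (a3, 0)).
    rewrite /dmul /= => E; apply: (useH E); rewrite /hoch2; expand; zmod_ring.
  + move=> a1 a2; have := congr1 snd (HNI1 (a1, 0) (a2, 0)).
    rewrite /dmul /dN /= => E; apply: (useH E); rewrite /dN1 /hoch1 /partialN2; expand; zmod_ring.
- case=> mu1 N1 [] mu1' N1' [/= Hm1 [HN1 [Hass1 HNI1]]] [/= Hm1' [HN1' [Hass1' HNI1']]].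
  split.
  + case=> phi [Hphi [Hm HNe]]; exists phi; split=> //; split.
    * move=> a1 a2 /=; have := congr1 snd (Hm (a1, 0) (a2, 0)).
      rewrite /dmul /dphi /= => E; apply: (useH E); rewrite /hoch1; expand; zmod_ring.
    * move=> a /=; have := congr1 snd (HNe (a, 0)).
      rewrite /dN /dphi /= => E; apply: (useH E); rewrite /partialN1; expand; zmod_ring.
  + case=> f [Hf [H1 H2]]; exists f; split=> //; split.
    * move=> [x1 x2] [y1 y2]; rewrite /dmul /dphi /=; congr pair; try done.
      have := H1 x1 y1; rewrite /= /hoch1 => E; apply: (useH E); expand; zmod_ring.
    * move=> [x1 x2]; rewrite /dN /dphi /=; congr pair; try done.
      have := H2 x1; rewrite /= /partialN1 => E; apply: (useH E); expand; zmod_ring.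
- case=> mu1 N1 [/= Hm1 [HN1 [Hcoc1 Hcoc2]]]; exists (mu1, N1); split.
  + split=> //; split=> //; split.
    * move=> [x1 x2] [y1 y2] [z1 z2]; rewrite /dmul /=; congr pair; try by rewrite Hass.
      have := Hcoc1 x1 y1 z1; rewrite /hoch2 => E; apply: (useH E).
      apply: (useH (Hass x1 y1 z2)); apply: (useH (Hass x1 y2 z1)); apply: (useH (Hass x2 y1 z1)).
      expand; zmod_ring.
    * move=> [x1 x2] [y1 y2]; rewrite /dmul /dN /=; congr pair; try by rewrite HNI.
      have := Hcoc2 x1 y1; rewrite /dN1 /hoch1 /partialN2 => E; apply: (useH E).
      apply: (useH (HNI x1 y2)); apply: (useH (HNI x2 y1)).
      expand; zmod_ring.
  + exists (fun _ => 0); split; first by move=> c x y; rewrite scaler0 addr0.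
    split=> [a1 a2|a] /=; rewrite ?/hoch1 ?/partialN1; expand; zmod_ring.
Qed.
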